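(* Let $N$ firms have outputs $x_i\in K_i\subseteq[0,\infty)$, $K=\prod_iK_i$, $X=\sum_{i=1}^Nx_i$, let $b^*>0$, $\sigma>1$, and for a parameter $\theta=a\in\Theta$ define $F(x;\theta)$ by $F_i(x;\theta)=c_i'(x_i)-(\theta-b^*X^\sigma)+\sigma b^*X^{\sigma-1}x_i$. Suppose each $c_i$ is convex and continuously differentiable with $c_i'$ Lipschitz continuous on $K_i$, each $K_i$ is nonempty, closed, convex and bounded, $\Theta=[\delta,\Delta]$ with $0<\delta<\Delta$, and $X\ge\eta$ for some $\eta>0$ and all $x\in K$. If $N<\frac{3\sigma-1}{\sigma-1}$, then: (a) if $x(\theta)$ denotes the solution of VI$(K,F(\cdot;\theta))$, then $x(\theta)$ is Lipschitz continuous in $\theta$ on $\Theta$; (b) for $\epsilon>0$, if $x(\theta,\epsilon)$ denotes the solution of VI$(K,F(\cdot;\theta)+\epsilon\mathbf{I})$, then $x(\theta,\epsilon)$ is Lipschitz continuous in $\theta$ and $\epsilon$.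
   Context: VI$(K,G)$ asks for $x\in K$ with $(y-x)^TG(x)\ge0$ for all $y\in K$. $F(\cdot;\theta)+\epsilon\mathbf{I}$ denotes $x\mapsto F(x;\theta)+\epsilon x$. $F(\cdot;\theta)$ is the gradient map of the Cournot game with price $\theta-b^*X^\sigma$ in which firm $i$ minimizes $c_i(x_i)-(\theta-b^*X^\sigma)x_i$; here the intercept $a=\theta$ is the parameter. *)

(* Defs.v *)
From mathcomp Require Import all_boot all_order all_algebra.
From mathcomp Require Import all_classical all_reals all_analysis.
Set Implicit Arguments. Unset Strict Implicit. Unset Printing Implicit Defensive.
Import Order.TTheory GRing.Theory Num.Theory numFieldNormedType.Exports.
Local Open Scope classical_set_scope.
Local Open Scope ring_scope.

Section CournotDefs.
Variable R : realType.
Variable N : nat.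

Definition profile := 'I_N -> R.

Definition total_output (x : profile) : R := \sum_(i < N) x i.

Definition in_prod (K : 'I_N -> set R) (x : profile) : Prop := forall i, K i (x i).

Definition convex_subset (A : set R) : Prop :=
  forall s t l, A s -> A t -> 0 <= l -> l <= 1 -> A (l * s + (1 - l) * t).

Definition convex_on (A : set R) (f : R -> R) : Prop :=
  forall s t l, A s -> A t -> 0 <= l -> l <= 1 ->
    f (l * s + (1 - l) * t) <= l * f s + (1 - l) * f t.

Definition bounded_subset (A : set R) : Prop :=
  exists M : R, forall t, A t -> `|t| <= M.

Definition lipschitz_on_set (A : set R) (f : R -> R) : Prop :=
  exists L : R, forall s t, A s -> A t -> `|f s - f t| <= L * `|s - t|.

Definition cournotF (dc : 'I_N -> R -> R) (b sigma theta : R) (x : profile) : profile :=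
  fun i => dc i (x i) - (theta - b * (total_output x) `^ sigma)
           + sigma * b * (total_output x) `^ (sigma - 1) * x i.

Definition add_eps_id (G : profile -> profile) (eps : R) : profile -> profile :=
  fun x i => G x i + eps * x i.

Definition solves_VI (K : 'I_N -> set R) (G : profile -> profile) (x : profile) : Prop :=
  in_prod K x /\ forall y, in_prod K y -> 0 <= \sum_(i < N) (y i - x i) * G x i.

(* l1 distance between profiles (any norm on R^N gives the same notion of Lipschitz) *)
Definition pdist (x y : profile) : R := \sum_(i < N) `|x i - y i|.

End CournotDefs.

(* Main.v *)
Require Import Defs.
From mathcomp Require Import all_boot all_order all_algebra.
From mathcomp Require Import all_classical all_reals all_analysis.
From mathcomp Require Import ring lra.
Import Order.TTheory GRing.Theory Num.Theory numFieldNormedType.Exports.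
Local Open Scope classical_set_scope.
Local Open Scope ring_scope.

Section P.
Variable R : realType.

Lemma vi1_le (A : set R) (phi psi : R -> R) (m t t' : R) :
  A t -> A t' ->
  (forall s, A s -> 0 <= (s - t) * phi t) ->
  (forall s, A s -> 0 <= (s - t') * psi t') ->
  (forall s s', A s -> A s' -> s' <= s -> m * (s - s') <= phi s - phi s') ->
  t' < t -> m * (t - t') <= psi t' - phi t'.
Proof.
move=> At At' Ht Ht' Hm lt.
have h1 := Ht t' At'. have h2 := Ht' t At.
have d0 : 0 < t - t' by rewrite subr_gt0.
have p1 : phi t <= 0.
  by move: h1; rewrite -opprB mulNr oppr_ge0 pmulr_rle0.
have p2 : 0 <= psi t' by move: h2; rewrite pmulr_rge0.
have := Hm t t' At At' (ltW lt). lra.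
Qed.

Variable N : nat.
Implicit Types (K : 'I_N -> set R) (x y : profile R N).

Lemma vi_coord K G x : solves_VI K G x -> forall i s, K i s -> 0 <= (s - x i) * G x i.
Proof.
move=> [Kx H] i s Ks.
pose y := fun j => if j == i then s else x j.
have Ky : in_prod K y by move=> j; rewrite /y; case: eqP => [->|].
have := H y Ky; rewrite (bigD1 i) //= big1 ?addr0 /y ?eqxx //.
by move=> j /negPf ->; rewrite subrr mul0r.
Qed.


Lemma stab1 K (G1 G2 : profile R N -> profile R N) (g1 g2 : 'I_N -> R -> R -> R)
  (eta m D : R) x x' :
  (forall x i, G1 x i = g1 i (total_output x) (x i)) ->
  (forall x i, G2 x i = g2 i (total_output x) (x i)) ->
  (forall x, in_prod K x -> eta <= total_output x) ->
  (forall i X s s', eta <= X -> K i s -> K i s' -> s' <= s ->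
     m * (s - s') <= g1 i X s - g1 i X s') ->
  (forall i X X' t, eta <= X' -> X' <= X -> K i t -> g1 i X' t <= g1 i X t) ->
  (forall i X t, K i t -> `|g1 i X t - g2 i X t| <= D) ->
  0 <= D -> 0 <= m ->
  solves_VI K G1 x -> solves_VI K G2 x' ->
  total_output x' <= total_output x ->
  m * pdist x x' <= 2 * N%:R * D.
Proof.
move=> eG1 eG2 Heta Hsm Hmx HD D0 m0 s1 s2 le12.
have Kx := s1.1; have Kx' := s2.1.
have c1 := vi_coord K G1 x s1; have c2 := vi_coord K G2 x' s2.
set X := total_output x in le12 *; set X' := total_output x' in le12 *.
have eX' : eta <= X' by exact: Heta.
have eX : eta <= X by exact: Heta.
have hi : forall i, m * (x i - x' i) <= D.
  move=> i; case: (ltP (x' i) (x i)) => [lt|le].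
  - have := @vi1_le (K i) (g1 i X) (g2 i X') m (x i) (x' i) (Kx i) (Kx' i).
    move=> /(_ _ _ _ lt) H.
    have H' : m * (x i - x' i) <= g2 i X' (x' i) - g1 i X (x' i).
      apply: H.
      + by move=> s Ks; rewrite -eG1; exact: c1.
      + by move=> s Ks; rewrite -eG2; exact: c2.
      + by move=> s s' Ks Ks' ss'; exact: Hsm.
    have h3 := Hmx i X X' (x' i) eX' le12 (Kx' i).
    have h4 := HD i X' (x' i) (Kx' i).
    have h5 : g2 i X' (x' i) - g1 i X' (x' i) <= D.
      by apply: le_trans h4; rewrite -opprB ler_normr lexx orbT.
    lra.
  - have : m * (x i - x' i) <= 0 by rewrite mulr_ge0_le0 // subr_le0.
    lra.
have hj : forall i, m * `|x i - x' i| <= 2 * D - m * (x i - x' i).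
  move=> i; have := hi i; case: (lerP 0 (x i - x' i)) => h.
    by rewrite ger0_norm //; lra.
  rewrite ltr0_norm // mulrN => _.
  have : 0 <= D by []. lra.
rewrite /pdist mulr_sumr.
apply: le_trans (ler_sum _ (fun i _ => hj i)) _.
rewrite sumrB sumr_const card_ord -mulr_sumr sumrB.
have -> : \sum_(i < N) x i - \sum_(i < N) x' i = X - X' by [].
have : 0 <= m * (X - X') by rewrite mulr_ge0 // subr_ge0.
rewrite -mulr_natl; lra.
Qed.


Lemma pdistC x x' : pdist x x' = pdist x' x.
Proof. by rewrite /pdist; apply: eq_bigr => i _; rewrite distrC. Qed.

Lemma stab K (G1 G2 : profile R N -> profile R N) (g1 g2 : 'I_N -> R -> R -> R)
  (eta m D : R) x x' :
  (forall x i, G1 x i = g1 i (total_output x) (x i)) ->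
  (forall x i, G2 x i = g2 i (total_output x) (x i)) ->
  (forall x, in_prod K x -> eta <= total_output x) ->
  (forall i X s s', eta <= X -> K i s -> K i s' -> s' <= s ->
     m * (s - s') <= g1 i X s - g1 i X s') ->
  (forall i X X' t, eta <= X' -> X' <= X -> K i t -> g1 i X' t <= g1 i X t) ->
  (forall i X s s', eta <= X -> K i s -> K i s' -> s' <= s ->
     m * (s - s') <= g2 i X s - g2 i X s') ->
  (forall i X X' t, eta <= X' -> X' <= X -> K i t -> g2 i X' t <= g2 i X t) ->
  (forall i X t, K i t -> `|g1 i X t - g2 i X t| <= D) ->
  0 <= D -> 0 <= m ->
  solves_VI K G1 x -> solves_VI K G2 x' ->
  m * pdist x x' <= 2 * N%:R * D.
Proof.
move=> e1 e2 He s1 m1 s2 m2 HD D0 m0 v1 v2.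
case: (lerP (total_output x') (total_output x)) => h.
  exact: (stab1 _ _ _ _ _ _ _ _ _ _ e1 e2 He s1 m1 HD).
rewrite pdistC; apply: (stab1 _ _ _ _ _ _ _ _ _ _ e2 e1 He s2 m2) => //; last exact: ltW.
by move=> i X t Kt; rewrite distrC; exact: HD.
Qed.

Lemma pdist0 x x' : pdist x x' <= 0 -> x = x'.
Proof.
move=> h; have h0 : pdist x x' = 0.
  by apply/eqP; rewrite eq_le h sumr_ge0.
apply: funext => i; apply/eqP; rewrite -subr_eq0 -normr_eq0.
move/eqP: h0; rewrite psumr_eq0 // => /allP /(_ i (mem_index_enum _)).
by rewrite implyTb.
Qed.

End P.
Section P2.
Variable R : realType.

Lemma K_itv (A : set R) : (exists t, A t) -> closed A -> convex_subset A ->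
  bounded_subset A -> exists l u, l <= u /\ forall t, A t <-> l <= t <= u.
Proof.
move=> [t0 At0] cA cvx [M HM].
have ne : A !=set0 by exists t0.
have ub : has_ubound A.
  by exists M => t At; apply: le_trans (HM t At); exact: ler_norm.
have lb : has_lbound A.
  exists (- M) => t At; rewrite lerNl; apply: le_trans (HM t At).
  by rewrite -normrN ler_norm.
have Au : A (sup A) by apply: cA; exact: closure_sup.
have Al : A (inf A).
  apply: (itv_closed_infimums ne cA); split.
    exact: ge_inf.
  by move=> y ly; exact: lb_le_inf.
have hs : forall t, A t -> t <= sup A by move=> t At; exact: sup_upper_bound.
have hi : forall t, A t -> inf A <= t by move=> t At; exact: ge_inf.
exists (inf A), (sup A); split; first exact: le_trans (hi _ At0) (hs _ At0).
move=> t; split; first by move=> At; rewrite hi ?hs.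
move=> /andP[lt tu].
have [e|ne'] := eqVneq (sup A) (inf A).
  have -> : t = inf A by apply/eqP; rewrite eq_le lt andbT -e.
  exact: Al.
have d0 : 0 < sup A - inf A.
  by rewrite subr_gt0 lt_def ne' (le_trans lt tu).
set lam := (t - inf A) / (sup A - inf A).
have -> : t = lam * sup A + (1 - lam) * inf A.
  by rewrite /lam; field; exact: (lt0r_neq0 d0).
apply: (cvx (sup A) (inf A) lam) => //.
  by rewrite /lam; apply: divr_ge0; [rewrite subr_ge0 | exact: ltW].
by rewrite /lam ler_pdivrMr // mul1r lerD2r.
Qed.

End P2.
Section P3.
Variable R : realType.

Lemma right_of_deleted (g : R -> R) : cvg (g @ 0^') -> g @ 0^'+ --> lim (g @ 0^').
Proof.
move=> cvfx A /cvfx /nbhs_ballP [_ /posnumP[e] xe_A].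
by exists e%:num => //= y xe_y; rewrite lt_def => /andP [xney _]; apply: xe_A.
Qed.

Lemma left_of_deleted (g : R -> R) : cvg (g @ 0^') -> g @ 0^'- --> lim (g @ 0^').
Proof.
move=> cvfx A /cvfx /nbhs_ballP [_ /posnumP[e] xe_A].
exists e%:num => //= y xe_y; rewrite lt_def => /andP [xney _].
by apply: xe_A => //; rewrite eq_sym.
Qed.

Lemma derivable_cvg (f : R -> R) x : derivable f x 1 ->
  cvg ((fun h => h^-1 * (f (h + x) - f x)) @ 0^').
Proof.
rewrite /derivable.
set d := (fun _ : R => _); set d' := (fun _ : R => _).
suff -> : d = d' by [].
by rewrite funeqE=> h; rewrite /d /d' /= [h%:A](mulr1).
Qed.

Lemma cvx_der_l (A : set R) (f : R -> R) s t :
  convex_on A f -> A s -> A t -> derivable f s 1 -> s < t ->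
  derive1 f s <= (f t - f s) / (t - s).
Proof.
move=> cvx As At der st.
have cv := @derivable_cvg f _ der.
have H := right_of_deleted _ cv.
rewrite /derive1 -(cvg_lim _ H) //.
apply: limr_le; first by apply/cvg_ex; eexists; exact: H.
have ts0 : 0 < t - s by rewrite subr_gt0.
near=> h.
have h0 : 0 < h by near: h; exact: nbhs_right_gt.
have h1 : h < t - s by near: h; exact: nbhs_right_lt.
set lam := h / (t - s).
have l0 : 0 <= lam by rewrite /lam divr_ge0 // ltW.
have l1 : lam <= 1 by rewrite /lam ler_pdivrMr // mul1r ltW.
have e1 : h + s = lam * t + (1 - lam) * s.
  by rewrite /lam; field; exact: lt0r_neq0.
have e2 : h * ((f t - f s) / (t - s)) = lam * (f t - f s).
  by rewrite /lam; field; exact: lt0r_neq0.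
have := cvx t s lam At As l0 l1; rewrite -e1 => hc.
rewrite /= mulrC ler_pdivrMr // mulrC e2.
have -> : lam * (f t - f s) = lam * f t + (1 - lam) * f s - f s by ring.
by rewrite lerD2r.
Unshelve. all: by end_near.
Qed.

Lemma cvx_der_r (A : set R) (f : R -> R) s t :
  convex_on A f -> A s -> A t -> derivable f t 1 -> s < t ->
  (f t - f s) / (t - s) <= derive1 f t.
Proof.
move=> cvx As At der st.
have cv := @derivable_cvg f _ der.
have H := left_of_deleted _ cv.
rewrite /derive1 -(cvg_lim _ H) //.
apply: limr_ge; first by apply/cvg_ex; eexists; exact: H.
have ts0 : 0 < t - s by rewrite subr_gt0.
near=> h.
have h0 : h < 0 by near: h; exact: nbhs_left_lt.
have h1 : - (t - s) < h by near: h; apply: nbhs_left_gt; rewrite oppr_lt0.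
set lam := - h / (t - s).
have l0 : 0 <= lam by rewrite /lam divr_ge0 // ?oppr_ge0 ltW.
have l1 : lam <= 1 by rewrite /lam ler_pdivrMr // mul1r lerNl ltW.
have e1 : h + t = lam * s + (1 - lam) * t.
  by rewrite /lam; field; exact: lt0r_neq0.
have e2 : h * ((f t - f s) / (t - s)) = lam * (f s - f t).
  by rewrite /lam; field; exact: lt0r_neq0.
have := cvx s t lam As At l0 l1; rewrite -e1 => hc.
rewrite /= [h^-1 * _]mulrC ler_ndivlMr // mulrC e2.
have -> : lam * (f s - f t) = lam * f s + (1 - lam) * f t - f t by ring.
by rewrite lerD2r.
Unshelve. all: by end_near.
Qed.

Lemma cvx_der_mono (A : set R) (f : R -> R) s t :
  convex_on A f -> A s -> A t -> (forall u, A u -> derivable f u 1) -> s <= t ->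
  derive1 f s <= derive1 f t.
Proof.
move=> cvx As At der; rewrite le_eqVlt => /orP[/eqP -> //|st].
exact: le_trans (cvx_der_l _ _ _ _ cvx As At (der s As) st) (cvx_der_r _ _ _ _ cvx As At (der t At) st).
Qed.

End P3.

Section P4.
Variable R : realType.

Lemma ex1 (a b : R) (phi : R -> R) : a <= b -> {within `[a,b], continuous phi} ->
  exists t, a <= t <= b /\ forall s, a <= s <= b -> 0 <= (s - t) * phi t.
Proof.
move=> ab cphi.
case: (lerP 0 (phi a)) => ha.
  exists a; rewrite lexx ab; split => // s /andP[aS sb].
  by rewrite mulr_ge0 // subr_ge0.
case: (lerP (phi b) 0) => hb.
  exists b; rewrite lexx ab; split => // s /andP[aS sb].
  by rewrite mulr_le0 // subr_le0.
have hv : Num.min (phi a) (phi b) <= 0 <= Num.max (phi a) (phi b).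
  apply/andP; split.
    by rewrite ge_min (ltW ha).
  by rewrite le_max (ltW hb) orbT.
have [t tab ht] := @IVT R phi a b 0 ab cphi hv.
move: tab; rewrite in_itv /= => tab.
by exists t; split => // s _; rewrite ht mulr0.
Qed.

Lemma vi1_abs (S : set R) (phi psi : R -> R) (m E t t' : R) :
  S t -> S t' ->
  (forall s, S s -> 0 <= (s - t) * phi t) ->
  (forall s, S s -> 0 <= (s - t') * psi t') ->
  (forall s s', S s -> S s' -> s' <= s -> m * (s - s') <= phi s - phi s') ->
  (forall s s', S s -> S s' -> s' <= s -> m * (s - s') <= psi s - psi s') ->
  (forall s, S s -> `|phi s - psi s| <= E) ->
  m * `|t - t'| <= E.
Proof.
move=> St St' Ht Ht' Hp Hq HE.
case: (ltgtP t t') => h.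
- have := vi1_le R S psi phi m t' t St' St Ht' Ht Hq h.
  rewrite distrC gtr0_norm ?subr_gt0 // => H.
  apply: le_trans H _; apply: le_trans (HE t St); exact: ler_norm.
- have := vi1_le R S phi psi m t t' St St' Ht Ht' Hp h.
  rewrite gtr0_norm ?subr_gt0 // => H.
  apply: le_trans H _; apply: le_trans (HE t' St'); rewrite distrC; exact: ler_norm.
- by rewrite h subrr normr0 mulr0; apply: le_trans (HE t St).
Qed.

Lemma cont_squeeze (f h : R -> R) x0 : {for x0, continuous h} -> h x0 = 0 ->
  (forall x, `|f x - f x0| <= h x) -> {for x0, continuous f}.
Proof.
move=> hc h0 hb; apply/cvgrPdist_lt => e e0.
move/cvgrPdist_lt: hc => /(_ e e0); apply: filterS => x.
rewrite h0 sub0r normrN => hlt; rewrite distrC.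
exact: le_lt_trans (hb x) (le_lt_trans (ler_norm _) hlt).
Qed.

End P4.

Section P5.
Variable R : realType.

Lemma exist_vi N (K : 'I_N -> set R) (l u : 'I_N -> R) (d : 'I_N -> R -> R)
  (A B : R -> R) (m : R) (G : profile R N -> profile R N) :
  (forall i, l i <= u i) -> (forall i t, K i t <-> l i <= t <= u i) ->
  (forall i s t, l i <= s -> s <= t -> t <= u i -> d i s <= d i t) ->
  (forall i, {within `[l i, u i], continuous (d i)}) ->
  0 < m ->
  (forall X, \sum_(i < N) l i <= X <= \sum_(i < N) u i -> m <= B X) ->
  (forall X, \sum_(i < N) l i <= X <= \sum_(i < N) u i -> {for X, continuous A}) ->
  (forall X, \sum_(i < N) l i <= X <= \sum_(i < N) u i -> {for X, continuous B}) ->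
  (forall x i, G x i = d i (x i) + A (total_output x) + B (total_output x) * x i) ->
  exists x, solves_VI K G x.
Proof.
move=> lu hK dmono dcont m0 Bm Acont Bcont eG.
set Lt := \sum_(i < N) l i; set Ut := \sum_(i < N) u i.
have LU : Lt <= Ut by apply: ler_sum => i _; exact: lu.
pose cl X := Num.min (Num.max X Lt) Ut.
have clin : forall X, Lt <= cl X <= Ut.
  by move=> X; rewrite /cl le_min le_max lexx orbT LU ge_min lexx orbT.
have clid : forall X, Lt <= X <= Ut -> cl X = X.
  by move=> X /andP[h1 h2]; rewrite /cl max_l // min_l.
have clc : forall X, {for X, continuous cl}.
  move=> X; apply: continuous_min; last exact: cvg_cst.
  by apply: continuous_max; [exact: cvg_id | exact: cvg_cst].
pose g i X t := d i t + A (cl X) + B (cl X) * t.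
have gsm : forall i X s s', l i <= s' <= u i -> l i <= s <= u i -> s' <= s ->
    m * (s - s') <= g i X s - g i X s'.
  move=> i X s s' /andP[ls' s'u] /andP[ls su] ss.
  have hd := dmono i s' s ls' ss su.
  have hB := Bm _ (clin X).
  have : m * (s - s') <= B (cl X) * (s - s') by rewrite ler_wpM2r // subr_ge0.
  rewrite /g; lra.
pose P i X := [set t | l i <= t <= u i /\
                 forall s, l i <= s <= u i -> 0 <= (s - t) * g i X t].
have Pex : forall i X, exists t, P i X t.
  move=> i X; apply: ex1; first exact: lu.
  move=> x.
  have h2 : {within `[l i, u i], continuous (fun t : R => A (cl X) + B (cl X) * t)}.
    apply: continuous_subspaceT => y.
    apply: cvgD; first exact: cvg_cst.
    apply: cvgMr; exact: cvg_id.
  have -> : g i X = (d i \+ (fun t => A (cl X) + B (cl X) * t)).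
    by apply: funext => t /=; rewrite /g addrA.
  exact: continuousD (dcont i x) (h2 x).
pose r i X := xget 0 (P i X).
have rP : forall i X, P i X (r i X) by move=> i X; apply: xgetPex; exact: Pex.
pose M := \sum_(i < N) (`|l i| + `|u i|).
have bM : forall i s, l i <= s <= u i -> `|s| <= M.
  move=> i s /andP[ls su].
  have h1 : `|s| <= `|l i| + `|u i|.
    case: (lerP 0 s) => s0.
      rewrite ger0_norm //; apply: le_trans su _; apply: le_trans (ler_norm _) _.
      by rewrite lerDr.
    rewrite ltr0_norm //; have : - s <= - l i by rewrite lerN2.
    move=> h; apply: le_trans h _; apply: le_trans (ler_norm _) _.
    by rewrite normrN lerDl.
  apply: le_trans h1 _; rewrite /M (bigD1 i) //= lerDl.
  by apply: sumr_ge0 => j _; rewrite addr_ge0.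
have rl : forall i X X0, m * `|r i X - r i X0| <=
    `|A (cl X) - A (cl X0)| + M * `|B (cl X) - B (cl X0)|.
  move=> i X X0.
  have [r1 v1] := rP i X; have [r2 v2] := rP i X0.
  apply: (@vi1_abs R [set t | l i <= t <= u i] (g i X) (g i X0)) => //.
  - by move=> s s' Ks Ks' ss; exact: gsm.
  - by move=> s s' Ks Ks' ss; exact: gsm.
  - move=> s Ks; rewrite /g.
    have -> : d i s + A (cl X) + B (cl X) * s - (d i s + A (cl X0) + B (cl X0) * s)
        = (A (cl X) - A (cl X0)) + (B (cl X) - B (cl X0)) * s by ring.
    apply: le_trans (ler_normD _ _) _; rewrite lerD2l normrM mulrC.
    by apply: ler_wpM2r => //; exact: bM Ks.
pose Phi X := \sum_(i < N) r i X - X.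
have Phic : forall X0, {for X0, continuous Phi}.
  move=> X0.
  pose h X := N%:R * m^-1 * (`|A (cl X) - A (cl X0)| + M * `|B (cl X) - B (cl X0)|)
              + `|X - X0|.
  apply: (@cont_squeeze R Phi h).
  - have cA : {for X0, continuous (A \o cl)}.
      exact: continuous_comp (clc X0) (Acont _ (clin X0)).
    have cB : {for X0, continuous (B \o cl)}.
      exact: continuous_comp (clc X0) (Bcont _ (clin X0)).
    apply: cvgD; last by apply: cvg_norm; apply: cvgB; [exact: cvg_id | exact: cvg_cst].
    apply: cvgMr; apply: cvgD.
      by apply: cvg_norm; apply: cvgB; [exact: cA | exact: cvg_cst].
    apply: cvgMr; apply: cvg_norm; apply: cvgB; [exact: cB | exact: cvg_cst].
  - by rewrite /h !subrr !normr0; ring.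
  - move=> X; rewrite /Phi /h.
    have -> : \sum_(i < N) r i X - X - (\sum_(i < N) r i X0 - X0)
        = \sum_(i < N) (r i X - r i X0) - (X - X0).
      by rewrite sumrB; ring.
    apply: le_trans (ler_normB _ _) _; apply: lerD => //.
    apply: le_trans (ler_norm_sum _ _ _) _.
    set Q := (`|A (cl X) - A (cl X0)| + M * `|B (cl X) - B (cl X0)|).
    have hi : forall i, `|r i X - r i X0| <= m^-1 * Q.
      by move=> i; rewrite mulrC ler_pdivlMr // mulrC; exact: rl.
    apply: le_trans (ler_sum _ (fun i _ => hi i)) _.
    rewrite sumr_const card_ord le_eqVlt; apply/orP; left; apply/eqP; rewrite -mulr_natl; ring.
have PL : 0 <= Phi Lt.
  rewrite /Phi subr_ge0; apply: ler_sum => i _.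
  by have [/andP[h1 _] _] := rP i Lt.
have PU : Phi Ut <= 0.
  rewrite /Phi subr_le0; apply: ler_sum => i _.
  by have [/andP[_ h1] _] := rP i Ut.
have hv : Num.min (Phi Lt) (Phi Ut) <= 0 <= Num.max (Phi Lt) (Phi Ut).
  by apply/andP; split; [rewrite ge_min PU orbT | rewrite le_max PL].
have [X hX e0] := @IVT R Phi Lt Ut 0 LU (continuous_subspaceT Phic) hv.
move: hX; rewrite in_itv /= => hX.
exists (fun i => r i X).
have tot : total_output (fun i => r i X) = X.
  by apply/eqP; rewrite -subr_eq0; apply/eqP; exact: e0.
split.
  by move=> i; apply/hK; have [h1 _] := rP i X.
move=> y Ky; apply: sumr_ge0 => i _.
rewrite eG tot.
have [_ h2] := rP i X.
have := h2 (y i) (iffLR (hK i (y i)) (Ky i)).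
by rewrite /g clid.
Qed.

End P5.

Section P6.
Variable R : realType.
Lemma powc (p X : R) : 0 < X -> {for X, continuous (fun Y : R => Y `^ p)}.
Proof.
move=> X0; apply: differentiable_continuous; apply/derivable1_diffP.
by apply: derivable_powR; rewrite in_itv /= X0.
Qed.
End P6.

Theorem proposition4 (R : realType) (N : nat) (K : 'I_N -> set R)
  (c : 'I_N -> R -> R) (b sigma delta Delta : R) :
  0 < b -> 1 < sigma ->
  (forall i, exists t, K i t) ->
  (forall i, closed (K i)) ->
  (forall i, convex_subset (K i)) ->
  (forall i, bounded_subset (K i)) ->
  (forall i t, K i t -> 0 <= t) ->
  (forall i, convex_on (K i) (c i)) ->
  (forall i t, K i t -> derivable (c i) t 1) ->
  (forall i, {within K i, continuous (derive1 (c i))}) ->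
  (forall i, lipschitz_on_set (K i) (derive1 (c i))) ->
  0 < delta -> delta < Delta ->
  (exists eta : R, 0 < eta /\ forall x, in_prod K x -> eta <= total_output x) ->
  N%:R < (3 * sigma - 1) / (sigma - 1) ->
  (* (a) the solution x(theta) of VI(K, F(.;theta)) exists, is unique, and is
         Lipschitz in theta on Theta = [delta, Delta] *)
  (exists xs : R -> @profile R N,
      (forall theta, delta <= theta <= Delta ->
         solves_VI K (cournotF (fun i => (derive1 (c i))) b sigma theta) (xs theta) /\
         (forall y, solves_VI K (cournotF (fun i => (derive1 (c i))) b sigma theta) y ->
            y = xs theta)) /\
      exists L : R, forall theta1 theta2,
        delta <= theta1 <= Delta -> delta <= theta2 <= Delta ->
        pdist (xs theta1) (xs theta2) <= L * `|theta1 - theta2|) /\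
  (* (b) the solution x(theta, eps) of VI(K, F(.;theta) + eps I), eps > 0, exists,
         is unique, and is Lipschitz in (theta, eps) on Theta x (0, +oo) *)
  (exists xe : R -> R -> @profile R N,
      (forall theta eps, delta <= theta <= Delta -> 0 < eps ->
         solves_VI K (add_eps_id (cournotF (fun i => (derive1 (c i))) b sigma theta) eps)
                   (xe theta eps) /\
         (forall y, solves_VI K
                      (add_eps_id (cournotF (fun i => (derive1 (c i))) b sigma theta) eps) y ->
            y = xe theta eps)) /\
      exists L : R, forall theta1 theta2 eps1 eps2,
        delta <= theta1 <= Delta -> delta <= theta2 <= Delta -> 0 < eps1 -> 0 < eps2 ->
        pdist (xe theta1 eps1) (xe theta2 eps2)
          <= L * (`|theta1 - theta2| + `|eps1 - eps2|)).
Proof.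
move=> b0 s1 Kne Kcl Kcv Kbd Kpos ccvx cder ccont clip d0 dD [eta [eta0 Heta]] HN.
have Hlu : forall i, exists p : R * R, p.1 <= p.2 /\ forall t, K i t <-> p.1 <= t <= p.2.
  move=> i; have [l [u h]] := K_itv R (K i) (Kne i) (Kcl i) (Kcv i) (Kbd i).
  by exists (l, u).
case: (choice Hlu) => lu hlu.
pose l i := (lu i).1; pose u i := (lu i).2.
have hK : forall i t, K i t <-> l i <= t <= u i by move=> i; exact: (hlu i).2.
have lu_ : forall i, l i <= u i by move=> i; exact: (hlu i).1.
pose d := fun i => derive1 (c i).
have Kl : forall i, K i (l i) by move=> i; apply/hK; rewrite lexx lu_.
have Ku : forall i, K i (u i) by move=> i; apply/hK; rewrite lexx lu_.
have dmono : forall i s t, l i <= s -> s <= t -> t <= u i -> d i s <= d i t.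
  move=> i s t ls st tu.
  have Ks : K i s by apply/hK; rewrite ls (le_trans st tu).
  have Kt : K i t by apply/hK; rewrite tu (le_trans ls st).
  exact: (cvx_der_mono R (K i) (c i) s t (ccvx i) Ks Kt (fun v Kv => cder i v Kv) st).
have dcont : forall i, {within `[l i, u i], continuous (d i)}.
  move=> i; have e : [set` `[l i, u i]] = K i.
    by apply/seteqP; split => t /=; rewrite in_itv /= => h; apply/hK.
  by rewrite e; exact: ccont i.
have etaLt : eta <= \sum_(i < N) l i by exact: (Heta l Kl).
have s0 : 0 < sigma by apply: lt_trans s1.
pose m := sigma * b * eta `^ (sigma - 1).
have m0 : 0 < m by rewrite /m mulr_gt0 ?mulr_gt0 // powR_gt0.
pose Mb := \sum_(i < N) u i.
have Mb0 : 0 <= Mb by apply: sumr_ge0 => i _; exact: Kpos i _ (Ku i).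
have hMb : forall i t, K i t -> `|t| <= Mb.
  move=> i t Kt; rewrite ger0_norm; last exact: Kpos i t Kt.
  have := Kt; move/hK => /andP[_ tu]; apply: le_trans tu _.
  rewrite /Mb (bigD1 i) //= lerDl; apply: sumr_ge0 => j _; exact: Kpos j _ (Ku j).
have powmono : forall p X' X : R, 0 <= p -> 0 <= X' -> X' <= X -> X' `^ p <= X `^ p.
  move=> p X' X p0 X'0 le.
  have h1 : X' \is Num.nneg by rewrite nnegrE.
  have h2 : X \is Num.nneg by rewrite nnegrE; exact: le_trans X'0 le.
  exact: (ge0_ler_powR p0 h1 h2 le).
pose gc (th ep : R) (i : 'I_N) (X t : R) := d i t + (- (th - b * X `^ sigma))
   + (sigma * b * X `^ (sigma - 1) + ep) * t.
have Bge : forall ep X : R, 0 <= ep -> eta <= X -> m <= sigma * b * X `^ (sigma - 1) + ep.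
  move=> ep X ep0 eX.
  have h : m <= sigma * b * X `^ (sigma - 1).
    rewrite /m ler_wpM2l ?mulr_ge0 ?(ltW s0) ?(ltW b0) //.
    by apply: powmono => //; rewrite ?subr_ge0 ?(ltW s1) ?(ltW eta0).
  by apply: le_trans h _; rewrite lerDl.
have SM : forall (th ep : R) i (X s s' : R), 0 <= ep -> eta <= X -> K i s -> K i s' -> s' <= s ->
    m * (s - s') <= gc th ep i X s - gc th ep i X s'.
  move=> th ep i X s s' ep0 eX Ks Ks' ss.
  have := Ks; move/hK => /andP[ls su]; have := Ks'; move/hK => /andP[ls' s'u].
  have hd := dmono i s' s ls' ss su.
  have hB := Bge ep X ep0 eX.
  have : m * (s - s') <= (sigma * b * X `^ (sigma - 1) + ep) * (s - s').
    by rewrite ler_wpM2r // subr_ge0.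
  rewrite /gc; lra.
have MX : forall (th ep : R) i (X X' t : R), 0 <= ep -> eta <= X' -> X' <= X -> K i t ->
    gc th ep i X' t <= gc th ep i X t.
  move=> th ep i X X' t ep0 eX' le Kt.
  have t0 := Kpos i t Kt.
  have X'0 : 0 <= X' by apply: le_trans (ltW eta0) eX'.
  have h1 := powmono sigma X' X (ltW s0) X'0 le.
  have h2 : X' `^ (sigma - 1) <= X `^ (sigma - 1).
    by apply: powmono => //; rewrite subr_ge0 ltW.
  have h3 : 0 <= b * (X `^ sigma - X' `^ sigma) by rewrite mulr_ge0 ?subr_ge0 // ltW.
  have h4 : 0 <= sigma * b * (X `^ (sigma - 1) - X' `^ (sigma - 1)) * t.
    by rewrite !mulr_ge0 ?subr_ge0 // ltW.
  rewrite /gc; lra.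
have HD : forall (th1 th2 ep1 ep2 : R) i (X t : R), K i t ->
    `|gc th1 ep1 i X t - gc th2 ep2 i X t| <= `|th1 - th2| + Mb * `|ep1 - ep2|.
  move=> th1 th2 ep1 ep2 i X t Kt.
  have -> : gc th1 ep1 i X t - gc th2 ep2 i X t = - (th1 - th2) + (ep1 - ep2) * t.
    by rewrite /gc; ring.
  apply: le_trans (ler_normD _ _) _; rewrite normrN lerD2l normrM mulrC.
  by apply: ler_wpM2r => //; exact: hMb Kt.
have exi : forall (th ep : R) (G : profile R N -> profile R N), 0 <= ep ->
    (forall x i, G x i = gc th ep i (total_output x) (x i)) -> exists x, solves_VI K G x.
  move=> th ep G ep0 eG.
  apply: (exist_vi R N K l u d (fun X => - (th - b * X `^ sigma))
            (fun X => sigma * b * X `^ (sigma - 1) + ep) m G) => //.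
  - move=> X /andP[h _]; apply: Bge => //; exact: le_trans etaLt h.
  - move=> X /andP[h _]; have X0 : 0 < X by apply: lt_le_trans eta0 (le_trans etaLt h).
    apply: cvgN; apply: cvgB; first exact: cvg_cst.
    apply: cvgMr; exact: powc.
  - move=> X /andP[h _]; have X0 : 0 < X by apply: lt_le_trans eta0 (le_trans etaLt h).
    apply: cvgD; last exact: cvg_cst.
    apply: cvgMr; exact: powc.
have key : forall (th1 th2 ep1 ep2 : R) (G1 G2 : profile R N -> profile R N) x x',
    0 <= ep1 -> 0 <= ep2 ->
    (forall x i, G1 x i = gc th1 ep1 i (total_output x) (x i)) ->
    (forall x i, G2 x i = gc th2 ep2 i (total_output x) (x i)) ->
    solves_VI K G1 x -> solves_VI K G2 x' ->
    m * pdist x x' <= 2 * N%:R * (`|th1 - th2| + Mb * `|ep1 - ep2|).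
  move=> th1 th2 ep1 ep2 G1 G2 x x' e1 e2 eG1 eG2 v1 v2.
  apply: (stab R N K G1 G2 (gc th1 ep1) (gc th2 ep2) eta m _ x x') => //.
  - by move=> i X s s' eX Ks Ks' ss; exact: SM.
  - by move=> i X X' t eX' le Kt; exact: MX.
  - by move=> i X s s' eX Ks Ks' ss; exact: SM.
  - by move=> i X X' t eX' le Kt; exact: MX.
  - by move=> i X t Kt; exact: HD.
  - by rewrite addr_ge0 ?mulr_ge0.
  - exact: ltW.
have eqa : forall (th : R) x i, cournotF (fun i => derive1 (c i)) b sigma th x i
    = gc th 0 i (total_output x) (x i).
  by move=> th x i; rewrite /cournotF /gc /d; ring.
have eqb : forall (th ep : R) x i,
    add_eps_id (cournotF (fun i => derive1 (c i)) b sigma th) ep x i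
    = gc th ep i (total_output x) (x i).
  by move=> th ep x i; rewrite /add_eps_id /cournotF /gc /d; ring.
split.
- have Hx : forall th : R, exists x, solves_VI K (cournotF (fun i => derive1 (c i)) b sigma th) x.
    by move=> th; apply: (exi th 0) => //; exact: eqa.
  case: (choice Hx) => xs hxs.
  exists xs; split.
    move=> th _; split; first exact: hxs.
    move=> y hy; apply: pdist0.
    have := key th th 0 0 _ _ y (xs th) (lexx 0) (lexx 0) (eqa th) (eqa th) hy (hxs th).
    rewrite !subrr normr0 mulr0 addr0 mulr0 => h.
    by move: h; rewrite pmulr_rle0.
  exists (2 * N%:R / m) => th1 th2 _ _.
  have := key th1 th2 0 0 _ _ _ _ (lexx 0) (lexx 0) (eqa th1) (eqa th2) (hxs th1) (hxs th2).
  rewrite subrr normr0 mulr0 addr0 => h.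
  by rewrite mulrAC ler_pdivlMr // mulrC.
- have Hx : forall th ep : R, exists x, 0 <= ep ->
      solves_VI K (add_eps_id (cournotF (fun i => derive1 (c i)) b sigma th) ep) x.
    move=> th ep; case: (lerP 0 ep) => ep0.
      have [x hx] := exi th ep _ ep0 (eqb th ep).
      by exists x.
    by exists (fun _ => 0).
  have Hx2 : forall th : R, exists f : R -> profile R N, forall ep, 0 <= ep ->
      solves_VI K (add_eps_id (cournotF (fun i => derive1 (c i)) b sigma th) ep) (f ep).
    move=> th; case: (choice (Hx th)) => f hf; by exists f.
  case: (choice Hx2) => xe hxe.
  exists xe; split.
    move=> th ep _ ep0; split; first exact: hxe (ltW ep0).
    move=> y hy; apply: pdist0.
    have := key th th ep ep _ _ y (xe th ep) (ltW ep0) (ltW ep0) (eqb th ep) (eqb th ep)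
       hy (hxe th ep (ltW ep0)).
    rewrite !subrr normr0 mulr0 addr0 mulr0 => h.
    by move: h; rewrite pmulr_rle0.
  exists (2 * N%:R * (1 + Mb) / m) => th1 th2 ep1 ep2 _ _ e1 e2.
  have := key th1 th2 ep1 ep2 _ _ _ _ (ltW e1) (ltW e2) (eqb th1 ep1) (eqb th2 ep2)
     (hxe th1 ep1 (ltW e1)) (hxe th2 ep2 (ltW e2)).
  move=> h.
  rewrite mulrAC ler_pdivlMr // mulrC; apply: le_trans h _.
  have a0 := normr_ge0 (th1 - th2); have a1 := normr_ge0 (ep1 - ep2).
  have k0 : 0 <= 2 * N%:R :> R by rewrite mulr_ge0 ?ler0n.
  have q : `|th1 - th2| + Mb * `|ep1 - ep2| <= (1 + Mb) * (`|th1 - th2| + `|ep1 - ep2|).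
    have := mulr_ge0 Mb0 a0. lra.
  apply: le_trans (ler_wpM2l k0 q) _.
  by rewrite !mulrA.
Qed.
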